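(* Let $S$ be a semigroup and $\mu$ a finitely-additive probability measure on $S$. If $\mu$ is right fairly invariant, then any two $\mathcal L$-classes contained in the same $\mathcal D$-class have equal $\mu$-measure. If $\mu$ is left fairly invariant, then any two $\mathcal R$-classes contained in the same $\mathcal D$-class have equal $\mu$-measure. If $\mu$ is both left and right fairly invariant, then any two $\mathcal H$-classes contained in the same $\mathcal D$-class have equal $\mu$-measure.
   Context: Green's relations on $S$: $a\,\mathcal L\,b$ iff $S^1a=S^1b$; $a\,\mathcal R\,b$ iff $aS^1=bS^1$; $\mathcal H=\mathcal L\cap\mathcal R$; $\mathcal D=\mathcal L\circ\mathcal R$. $s$ acts injectively on the left (right) of $A\subseteq S$ if $a\mapsto sa$ ($a\mapsto as$) is injective on $A$. A finitely-additive probability measure is $\mu:\mathcal P(S)\to[0,1]$ with $\mu(S)=1$, additive on disjoint sets; it is left fairly invariant if $\mu(sA)=\mu(A)$ whenever $s$ acts injectively on the left of $A$, right fairly invariant if $\mu(As)=\mu(A)$ whenever $s$ acts injectively on the right of $A$. *)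

(* Defs.v *)
From Stdlib Require Import Reals.
Open Scope R_scope.

Record Semigroup := {
  carrier :> Type;
  mul : carrier -> carrier -> carrier;
  mulA : forall x y z, mul x (mul y z) = mul (mul x y) z
}.

Section Defs.
Variable S : Semigroup.
Local Notation "x * y" := (mul S x y).

Definition S1_left (a : S) : S -> Prop := fun x => x = a \/ exists s, x = s * a.
Definition S1_right (a : S) : S -> Prop := fun x => x = a \/ exists s, x = a * s.

Definition greenL (a b : S) : Prop := forall x, S1_left a x <-> S1_left b x.
Definition greenR (a b : S) : Prop := forall x, S1_right a x <-> S1_right b x.
Definition greenH (a b : S) : Prop := greenL a b /\ greenR a b.
Definition greenD (a b : S) : Prop := exists c, greenL a c /\ greenR c b.

Definition Lclass (a : S) : S -> Prop := fun x => greenL a x.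
Definition Rclass (a : S) : S -> Prop := fun x => greenR a x.
Definition Hclass (a : S) : S -> Prop := fun x => greenH a x.

Definition lmul_set (s : S) (A : S -> Prop) : S -> Prop :=
  fun y => exists a, A a /\ y = s * a.
Definition rmul_set (A : S -> Prop) (s : S) : S -> Prop :=
  fun y => exists a, A a /\ y = a * s.

Definition acts_inj_left (s : S) (A : S -> Prop) : Prop :=
  forall a b, A a -> A b -> s * a = s * b -> a = b.
Definition acts_inj_right (s : S) (A : S -> Prop) : Prop :=
  forall a b, A a -> A b -> a * s = b * s -> a = b.

Definition fa_prob_measure (mu : (S -> Prop) -> R) : Prop :=
  (forall A, 0 <= mu A <= 1) /\
  mu (fun _ => True) = 1 /\
  (forall A B : S -> Prop, (forall x, A x -> B x -> False) ->
     mu (fun x => A x \/ B x) = mu A + mu B).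

Definition left_fairly_invariant (mu : (S -> Prop) -> R) : Prop :=
  forall (s : S) (A : S -> Prop), acts_inj_left s A -> mu (lmul_set s A) = mu A.
Definition right_fairly_invariant (mu : (S -> Prop) -> R) : Prop :=
  forall (s : S) (A : S -> Prop), acts_inj_right s A -> mu (rmul_set A s) = mu A.
End Defs.

(* Main.v *)
Require Import Defs.
From Stdlib Require Import Reals FunctionalExtensionality PropExtensionality.
Open Scope R_scope.

Definition Sop (S : Semigroup) : Semigroup :=
  {| carrier := carrier S; mul := fun x y => mul S y x;
     mulA := fun x y z => eq_sym (mulA S z y x) |}.

Lemma mu_ext (S : Semigroup) (mu : (S -> Prop) -> R) (A B : S -> Prop) :
  (forall x, A x <-> B x) -> mu A = mu B.
Proof.
  intro H. f_equal. apply functional_extensionality. intro x.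
  apply propositional_extensionality. apply H.
Qed.

Section G.
Variable S : Semigroup.
Local Notation "x * y" := (mul S x y).

Lemma L_unfold a b : greenL S a b ->
  (a = b \/ exists s, a = s*b) /\ (b = a \/ exists s, b = s*a).
Proof.
  intros H; split; [apply (H a) | apply (H b)]; left; reflexivity.
Qed.

Lemma in_S1L a b : S1_left S b a -> forall x, S1_left S a x -> S1_left S b x.
Proof.
  unfold S1_left. intros H x [-> | [s ->]].
  - exact H.
  - destruct H as [-> | [t ->]].
    + right; exists s; reflexivity.
    + right; exists (s*t). apply mulA.
Qed.

Lemma L_fold a b : (a = b \/ exists s, a = s*b) -> (b = a \/ exists s, b = s*a) ->
  greenL S a b.
Proof.
  intros H1 H2 x; split; apply in_S1L; assumption.
Qed.

Lemma L_sym a b : greenL S a b -> greenL S b a.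
Proof. intros H x; symmetry; apply H. Qed.

Lemma L_trans a b c : greenL S a b -> greenL S b c -> greenL S a c.
Proof. intros H1 H2 x. rewrite (H1 x); apply H2. Qed.

Lemma L_rcong a b t : greenL S a b -> greenL S (a*t) (b*t).
Proof.
  intros H. destruct (L_unfold a b H) as [H1 H2]. apply L_fold.
  - destruct H1 as [-> | [s ->]]; [left; reflexivity | right; exists s; symmetry; apply mulA].
  - destruct H2 as [-> | [s ->]]; [left; reflexivity | right; exists s; symmetry; apply mulA].
Qed.

Lemma fix_L a t' t x : a*t'*t = a -> greenL S a x -> x*t'*t = x.
Proof.
  intros Ha Hx. destruct (L_unfold a x Hx) as [_ [-> | [u ->]]].
  - exact Ha.
  - rewrite <- !mulA. rewrite (mulA S a t' t), Ha. reflexivity.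
Qed.

Lemma transfer mu (Hr : right_fairly_invariant S mu) (A B : S -> Prop) s s' :
  (forall x, A x -> x*s*s' = x /\ B (x*s)) ->
  (forall y, B y -> y*s'*s = y /\ A (y*s')) -> mu A = mu B.
Proof.
  intros H1 H2. rewrite <- (Hr s A).
  - apply mu_ext. intro y; split.
    + intros [a [Ha ->]]. apply (H1 a Ha).
    + intros Hy. exists (y*s'). split; [apply (H2 y Hy) | symmetry; apply (H2 y Hy)].
  - intros a b Ha Hb E.
    rewrite <- (proj1 (H1 a Ha)), <- (proj1 (H1 b Hb)), E. reflexivity.
Qed.

End G.
Section G2.
Variable S : Semigroup.
Local Notation "x * y" := (mul S x y).

Lemma R_cases a b : greenR S a b -> a = b \/ exists t t', a = b*t /\ b = a*t'.
Proof.
  intro H. destruct (L_unfold (Sop S) a b H) as [[E | [t Ht]] [E' | [t' Ht']]].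
  - left; exact E.
  - left; exact E.
  - left; symmetry; exact E'.
  - right. exists t, t'. split; assumption.
Qed.

Lemma GL_R mu (Hr : right_fairly_invariant S mu) a b :
  greenR S a b -> mu (Lclass S a) = mu (Lclass S b).
Proof.
  intro H. destruct (R_cases a b H) as [-> | [t [t' [Ha Hb]]]]; [reflexivity|].
  assert (Ea : a*t'*t = a) by (rewrite <- Hb; symmetry; exact Ha).
  assert (Eb : b*t*t' = b) by (rewrite <- Ha; symmetry; exact Hb).
  apply (transfer S mu Hr _ _ t' t).
  - intros x Hx. split; [exact (fix_L S a t' t x Ea Hx)|].
    unfold Lclass. rewrite Hb. apply (L_rcong S). exact Hx.
  - intros y Hy. split; [exact (fix_L S b t t' y Eb Hy)|].
    unfold Lclass. rewrite Ha. apply (L_rcong S). exact Hy.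
Qed.

Lemma R_sym a b : greenR S a b -> greenR S b a.
Proof. exact (L_sym (Sop S) a b). Qed.
Lemma R_trans a b c : greenR S a b -> greenR S b c -> greenR S a c.
Proof. exact (L_trans (Sop S) a b c). Qed.

Lemma R_step x t' t : x*t'*t = x -> greenR S x (x*t').
Proof.
  intro E. apply (L_fold (Sop S)).
  - right. exists t. symmetry. exact E.
  - right. exists t'. reflexivity.
Qed.

Lemma GH_R mu (Hr : right_fairly_invariant S mu) a b :
  greenR S a b -> mu (Hclass S a) = mu (Hclass S b).
Proof.
  intro H. destruct (R_cases a b H) as [-> | [t [t' [Ha Hb]]]]; [reflexivity|].
  assert (Ea : a*t'*t = a) by (rewrite <- Hb; symmetry; exact Ha).
  assert (Eb : b*t*t' = b) by (rewrite <- Ha; symmetry; exact Hb).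
  apply (transfer S mu Hr _ _ t' t).
  - intros x [HxL HxR]. pose proof (fix_L S a t' t x Ea HxL) as E.
    split; [exact E|]. split.
    + rewrite Hb. apply (L_rcong S). exact HxL.
    + apply (R_trans _ a); [apply R_sym; exact H|].
      apply (R_trans _ x); [exact HxR|]. apply (R_step x t' t E).
  - intros y [HyL HyR]. pose proof (fix_L S b t t' y Eb HyL) as E.
    split; [exact E|]. split.
    + rewrite Ha. apply (L_rcong S). exact HyL.
    + apply (R_trans _ b); [exact H|].
      apply (R_trans _ y); [exact HyR|]. apply (R_step y t t' E).
Qed.

End G2.

Theorem mainTheorem10 (S : Semigroup) (mu : (S -> Prop) -> R)
  (Hmu : fa_prob_measure S mu) :
  (right_fairly_invariant S mu ->
     forall a b : S, greenD S a b -> mu (Lclass S a) = mu (Lclass S b)) /\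
  (left_fairly_invariant S mu ->
     forall a b : S, greenD S a b -> mu (Rclass S a) = mu (Rclass S b)) /\
  (left_fairly_invariant S mu -> right_fairly_invariant S mu ->
     forall a b : S, greenD S a b -> mu (Hclass S a) = mu (Hclass S b)).
Proof.
  split; [|split].
  - intros Hr a b [c [Hac Hcb]].
    transitivity (mu (Lclass S c)).
    + apply mu_ext. intro x; split; intro Hx.
      * exact (L_trans S c a x (L_sym S a c Hac) Hx).
      * exact (L_trans S a c x Hac Hx).
    + apply GL_R; assumption.
  - intros Hl a b [c [Hac Hcb]].
    transitivity (mu (Rclass S c)).
    + exact (GL_R (Sop S) mu Hl a c Hac).
    + apply mu_ext. intro x; split; intro Hx.
      * exact (R_trans S b c x (R_sym S c b Hcb) Hx).
      * exact (R_trans S c b x Hcb Hx).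
  - intros Hl Hr a b [c [Hac Hcb]].
    transitivity (mu (Hclass S c)).
    + pose proof (GH_R (Sop S) mu Hl a c Hac) as E.
      transitivity (mu (Hclass (Sop S) a)).
      * apply mu_ext. intro x. unfold Hclass, greenH. simpl. tauto.
      * rewrite E. apply mu_ext. intro x. unfold Hclass, greenH. simpl. tauto.
    + apply GH_R; assumption.
Qed.
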